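(* Let $n\ge3$, let $q\in\mathbb{C}\setminus\{0\}$ not be a root of unity, and put $a=q/(1+q)$, $b=1/(1+q)$. For $i=1,\dots,n-1$ define the $(n-1)\times(n-1)$ matrices \[u_i=(1-\delta_{i,1})\,b\,e_{i,i-1}+e_{ii}+(1-\delta_{i,n-1})\,a\,e_{i,i+1},\] \[v_i=(1-\delta_{i,1})\,b(n-1)\,e_{i,i-1}+(2-n)\,e_{ii}+(1-\delta_{i,n-1})\,a(n-1)\,e_{i,i+1}+E(i).\] Then (a) the Lie algebra generated by $u_1,\dots,u_{n-1}$ is $\mathfrak{gl}_{n-1}(\mathbb{C})$, and (b) the Lie algebra generated by $v_1,\dots,v_{n-1}$ is $\mathfrak{sl}_{n-1}(\mathbb{C})$.
   Context: $e_{ij}$ ($1\le i,j\le n-1$) are the standard matrix units of $(n-1)\times(n-1)$ complex matrices, $E(i)=I_{n-1}-e_{ii}$, and $\delta$ is the Kronecker delta (terms with an index outside $1,\dots,n-1$ are absent). Lie algebras are taken inside $\mathfrak{gl}_{n-1}(\mathbb{C})$ with the commutator bracket. *)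

(* Defs.v *)
From HB Require Import structures.
From mathcomp Require Import all_boot all_order all_algebra.
From mathcomp Require Import complex.
From mathcomp Require Import reals.
Set Implicit Arguments. Unset Strict Implicit. Unset Printing Implicit Defensive.
Import Order.TTheory GRing.Theory Num.Theory.
Local Open Scope ring_scope.

Definition lie_subalg (C : comNzRingType) (m : nat) (S : 'M[C]_m -> Prop) : Prop :=
  [/\ S 0,
      (forall (c : C) x y, S x -> S y -> S (c *: x + y)) &
      (forall x y, S x -> S y -> S (x *m y - y *m x))].

Definition lie_gen (C : comNzRingType) (m : nat) (G : 'M[C]_m -> Prop) : 'M[C]_m -> Prop :=
  fun x => forall S : 'M[C]_m -> Prop,
    lie_subalg S -> (forall g, G g -> S g) -> S x.

(* Indices: the paper's index i in {1,...,n-1} is the ordinal i-1 : 'I_(n-1).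
   e_{i,i-1} and e_{i,i+1} are absent when the column index is out of range. *)
Definition a_coef (C : fieldType) (q : C) : C := q / (1 + q).
Definition b_coef (C : fieldType) (q : C) : C := 1 / (1 + q).

Definition u_mx (C : fieldType) (n : nat) (q : C) (i : 'I_(n.-1)) : 'M[C]_(n.-1) :=
  \matrix_(r, c)
    (if r == i then
       (if (c : nat) == i then 1
        else if (c.+1 == i)%N then b_coef q
        else if ((c : nat) == i.+1)%N then a_coef q
        else 0)
     else 0).

(* v_i = b(n-1) e_{i,i-1} + (2-n) e_{ii} + a(n-1) e_{i,i+1} + E(i),
   E(i) = I - e_{ii} *)
Definition v_mx (C : fieldType) (n : nat) (q : C) (i : 'I_(n.-1)) : 'M[C]_(n.-1) :=
  \matrix_(r, c)
    (if r == i then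
       (if (c : nat) == i then 2 - n%:R
        else if (c.+1 == i)%N then b_coef q * (n%:R - 1)
        else if ((c : nat) == i.+1)%N then a_coef q * (n%:R - 1)
        else 0)
     else 0)
  + (1%:M - delta_mx i i).

(* Main.v *)
Require Import Defs.
From HB Require Import structures.
From mathcomp Require Import all_boot all_order all_algebra.
From mathcomp Require Import complex.
From mathcomp Require Import reals.
From mathcomp Require Import ring zify.
Set Implicit Arguments. Unset Strict Implicit. Unset Printing Implicit Defensive.
Import Order.TTheory GRing.Theory Num.Theory.
Local Open Scope ring_scope.

Section Gen.
Variable C : numFieldType.

Lemma lie_add m (S : 'M[C]_m -> Prop) x y : lie_subalg S -> S x -> S y -> S (x + y).
Proof. by case=> _ H _ Sx Sy; rewrite -[x]scale1r; apply: H. Qed.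

Lemma lie_scale m (S : 'M[C]_m -> Prop) c x : lie_subalg S -> S x -> S (c *: x).
Proof. by case=> H0 H _ Sx; rewrite -[_ *: _]addr0; apply: H. Qed.

Lemma lie_br m (S : 'M[C]_m -> Prop) x y : lie_subalg S -> S x -> S y -> S (x *m y - y *m x).
Proof. by case=> _ _ H; apply: H. Qed.

Lemma lie_sum m (S : 'M[C]_m -> Prop) (I : Type) (r : seq I) (P : pred I) (F : I -> 'M_m) :
  lie_subalg S -> (forall i, S (F i)) -> S (\sum_(i <- r | P i) F i).
Proof.
move=> HS HF; elim/big_ind: _ => //; first by case: HS.
by move=> x y; apply: lie_add.
Qed.

Lemma sum_deltaL n p (a : 'I_p) (b : 'I_n) (r : 'I_p) (F : 'I_n -> C) :
  \sum_l (delta_mx a b : 'M[C]_(p, n)) r l * F l = (r == a)%:R * F b.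
Proof.
rewrite (bigD1 b) //= big1 ?addr0; first by rewrite mxE eqxx andbT.
by move=> l /negPf Hl; rewrite mxE Hl andbF mul0r.
Qed.

Lemma sum_deltaR n p (a : 'I_n) (b : 'I_p) (s : 'I_p) (F : 'I_n -> C) :
  \sum_l F l * (delta_mx a b : 'M[C]_(n, p)) l s = F a * (s == b)%:R.
Proof.
rewrite (bigD1 a) //= big1 ?addr0; first by rewrite mxE eqxx.
by move=> l /negPf Hl; rewrite mxE Hl mulr0.
Qed.

Lemma dWd m (W : 'M[C]_m) (a b c d : 'I_m) :
  delta_mx a b *m W *m delta_mx c d = W b c *: delta_mx a d.
Proof.
apply/matrixP=> r s; rewrite -mulmxA !mxE sum_deltaL mxE sum_deltaR.
by case: (r == a); case: (s == d); rewrite /= ?mul0r ?mulr0 ?mul1r ?mulr1.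
Qed.

Section Key.
Variable m : nat.
Variable W : 'M[C]_m.
Let f (i j : 'I_m) := delta_mx i j *m W.

Lemma ff a b c d : f a b *m f c d = W b c *: f a d.
Proof. by rewrite /f mulmxA dWd -scalemxAl. Qed.

Lemma move_col (S : 'M[C]_m -> Prop) i j k :
  lie_subalg S -> W k k = 1 -> S (f k k) -> S (f i j) -> W j k != 0 -> S (f i k).
Proof.
move=> HS Wkk Sk Sij Wjk.
have S1 := lie_br HS Sk Sij.
have S2 := lie_br HS Sk S1.
have S3 := lie_add HS (lie_scale (1/2) HS (lie_add HS S2 (lie_scale (-1) HS S1)))
   (lie_scale (W j k * W k i) HS Sk).
have := lie_scale (W j k)^-1 HS S3.
rewrite !mulmxBr !mulmxBl !ff ?Wkk ?scale1r -?scalemxAl -?scalemxAr ?ff ?Wkk ?scale1r ?scalerA.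
move: (f k j) (f i k) (f k k) => A B D.
have h2 : (2 : C) != 0 by rewrite pnatr_eq0.
set T := (X in S X -> _).
suff -> : B = T by [].
rewrite /T; apply/matrixP=> r s; rewrite !mxE. field. by rewrite Wjk.
Qed.

Lemma reach_all (S : 'M[C]_m -> Prop) : lie_subalg S -> (forall k, W k k = 1) ->
  (forall k, S (f k k)) ->
  (forall j k : 'I_m, (k : nat) = (j : nat).+1 -> W j k != 0 /\ W k j != 0) ->
  forall i j, S (f i j).
Proof.
move=> HS W1 Sd Had i.
have up : forall d (j : 'I_m), (j : nat) = (i + d)%N -> S (f i j).
  elim=> [|d IH] j Hj.
    by rewrite addn0 in Hj; rewrite (_ : j = i) //; apply: val_inj.
  have lt : (i + d < m)%N by have := ltn_ord j; lia.
  apply: (@move_col _ _ (Ordinal lt)) => //; first by apply: IH.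
  by case: (Had (Ordinal lt) j _) => //=; rewrite Hj addnS.
have down : forall d (j : 'I_m), ((j : nat) + d)%N = i -> S (f i j).
  elim=> [|d IH] j Hj.
    by rewrite addn0 in Hj; rewrite (_ : j = i) //; apply: val_inj.
  have lt : (j.+1 < m)%N by have := ltn_ord i; lia.
  apply: (@move_col _ _ (Ordinal lt)) => //; first by apply: IH => /=; lia.
  by case: (Had j (Ordinal lt) _).
move=> j; case: (leqP i j) => h.
  by apply: (up (j - i)%N); lia.
by apply: (down (i - j)%N); lia.
Qed.

Lemma key (S : 'M[C]_m -> Prop) : lie_subalg S -> (forall k, W k k = 1) ->
  (forall k, S (f k k)) ->
  (forall j k : 'I_m, (k : nat) = (j : nat).+1 -> W j k != 0 /\ W k j != 0) ->
  W \in unitmx -> forall x, S x.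
Proof.
move=> HS W1 Sd Had Wu x.
have SY : forall Y, S (Y *m W).
  move=> Y; rewrite [Y]matrix_sum_delta !mulmx_suml; apply: lie_sum => // i.
  rewrite mulmx_suml; apply: lie_sum => // j.
  by rewrite -scalemxAl; apply: lie_scale => //; apply: reach_all.
by rewrite -[x](mulmxKV Wu); apply: SY.
Qed.
End Key.
End Gen.
Section Kern.
Variable C : numFieldType.

Definition Wmx (m : nat) (al be : C) : 'M[C]_m := \matrix_(r, c)
  (if (c : nat) == r then 1 else if (c.+1 == r)%N then be
   else if ((c : nat) == r.+1)%N then al else 0).

Lemma sum_pick M k (x : C) :
  \sum_(r < M) (if (r : nat) == k then x else 0) = if (k < M)%N then x else 0.
Proof.
elim: M => [|M IH]; first by rewrite big_ord0.
rewrite big_ord_recr /= IH; case: eqP => [->|ne]; first by rewrite ltnn ltnSn add0r.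
by rewrite addr0; have -> : (k < M.+1)%N = (k < M)%N by apply/idP/idP; lia.
Qed.

Lemma point (V : nat -> C) al be (r c : nat) :
  V r.+1 * (if c == r then 1 else if (c.+1 == r)%N then be
   else if (c == r.+1)%N then al else 0) =
  (if r == c then V c.+1 else 0) + (if r == c.+1 then be * V c.+2 else 0)
  + (if r.+1 == c then al * V c else 0).
Proof.
repeat (case: eqP => ?).
all: try (exfalso; lia).
all: subst; ring.
Qed.

Fixpoint Aseq (s q : C) (k : nat) : C :=
  match k with
  | 0 => 0
  | 1 => 1
  | S ((S k') as k1) => - s * (1 + q) * Aseq s q k1 - q * Aseq s q k'
  end.

Lemma Aseq_SS s q k : Aseq s q k.+2 = - s * (1 + q) * Aseq s q k.+1 - q * Aseq s q k.
Proof. by []. Qed.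

Lemma Aclosed s q : s = 1 \/ s = -1 -> forall k,
  Aseq s q k * (q - 1) * (- s) = (- s) ^+ k * (q ^+ k - 1).
Proof.
move=> Hs.
suff H : forall k, Aseq s q k * (q - 1) * (- s) = (- s) ^+ k * (q ^+ k - 1) /\
   Aseq s q k.+1 * (q - 1) * (- s) = (- s) ^+ k.+1 * (q ^+ k.+1 - 1).
  by move=> k; case: (H k).
elim=> [|k [IH1 IH2]].
  by rewrite /= !expr0 expr1 subrr; split; ring.
split=> //.
rewrite Aseq_SS.
rewrite (_ : (- s * (1 + q) * Aseq s q k.+1 - q * Aseq s q k) * (q - 1) * - s =
   - s * (1 + q) * (Aseq s q k.+1 * (q - 1) * - s) - q * (Aseq s q k * (q - 1) * - s)); last by ring.
rewrite IH1 IH2 !exprS.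
by case: Hs => ->; ring.
Qed.


Lemma Wker M (al be q s : C) : s = 1 \/ s = -1 -> 1 + q != 0 ->
  al = s * q / (1 + q) -> be = s / (1 + q) -> q ^+ M.+2 != 1 ->
  forall v : 'rV[C]_M.+1, v *m Wmx M.+1 al be = 0 -> v = 0.
Proof.
move=> Hs Hq -> -> Hqm v Hv.
pose V k := if k is k'.+1 then (if (k' < M.+1)%N then v 0 (inord k') else 0) else 0.
have HVj : forall j : 'I_M.+1, v 0 j = V j.+1 by move=> j; rewrite /V ltn_ord inord_val.
have HV0 : forall k, (M.+1 < k)%N -> V k = 0.
  by case=> // k h; rewrite /V; case: ifP => // h'; lia.
have HV00 : V 0%N = 0 by [].
clearbody V.
have rec : forall c, (c < M.+1)%N ->
    s * q / (1 + q) * V c + V c.+1 + s / (1 + q) * V c.+2 = 0.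
  move=> c hc; have := congr1 (fun w : 'rV[C]_M.+1 => w 0 (Ordinal hc)) Hv; rewrite !mxE => <-.
  under [RHS]eq_bigr => j _ do rewrite mxE HVj point.
  rewrite !big_split !sum_pick.
  have -> : nat_of_ord (Ordinal hc) = c by [].
  rewrite hc.
  rewrite /=.
  have -> : \sum_(i < M.+1) (if (i : nat).+1 == c then s * q / (1 + q) * V c else 0)
      = s * q / (1 + q) * V c.
    case: (c) hc => [|c'] hc'.
      by rewrite big1 ?HV00 ?mulr0.
    under eq_bigr do rewrite eqSS.
    by rewrite sum_pick (_ : (c' < M.+1)%N = true) //; lia.
  case: ifP => h2; last (rewrite (HV0 c.+2); last lia).
  1,2: ring.
have VA : forall k, (k <= M.+1)%N ->
    V k = Aseq s q k * V 1%N /\ V k.+1 = Aseq s q k.+1 * V 1%N.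
  elim=> [|k IH] hk; first by rewrite /= HV00 mul0r mul1r.
  case: (IH (ltnW hk)) => h1 h2; split => //.
  have R := rec k hk.
  rewrite Aseq_SS.
  rewrite (_ : (- s * (1 + q) * Aseq s q k.+1 - q * Aseq s q k) * V 1%N =
     - s * (1 + q) * (Aseq s q k.+1 * V 1%N) - q * (Aseq s q k * V 1%N)); last by ring.
  rewrite -h1 -h2.
  apply/eqP; rewrite -subr_eq0; apply/eqP.
  rewrite -(mulr0 (s * (1 + q))) -R.
  by case: Hs => ->; field.
have Anz : Aseq s q M.+2 != 0.
  apply/negP => /eqP A0; have := Aclosed q Hs M.+2.
  rewrite A0 !mul0r => /esym /eqP.
  rewrite mulf_eq0 subr_eq0 (negbTE Hqm) orbF expf_eq0 /= oppr_eq0.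
  by case: Hs => ->; rewrite ?oppr_eq0 oner_eq0.
have V1 : V 1%N = 0.
  case: (VA M.+1 (leqnn _)) => _ h; rewrite HV0 // in h.
  by apply/eqP; move/esym/eqP: h; rewrite mulf_eq0 (negbTE Anz).
apply/rowP => j; rewrite mxE HVj.
by case: (VA j.+1 (ltn_ord j)) => -> _; rewrite V1 mulr0.
Qed.
End Kern.
Section More.
Variable C : numFieldType.

Lemma Wunit M (q s : C) : s = 1 \/ s = -1 -> 1 + q != 0 -> q ^+ M.+2 != 1 ->
  Wmx M.+1 (s * (q / (1 + q))) (s * (1 / (1 + q))) \in unitmx.
Proof.
move=> Hs Hq Hqm.
rewrite -row_free_unit -kermx_eq0; apply/eqP/row_matrixP => i; rewrite row0.
have ea : s * (q / (1 + q)) = s * q / (1 + q) by rewrite mulrA.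
have eb : s * (1 / (1 + q)) = s / (1 + q) by rewrite mulrA mulr1.
apply: (Wker Hs Hq ea eb Hqm).
by rewrite -row_mul mulmx_ker row0.
Qed.

Lemma Wadj m (al be : C) (j k : 'I_m) : (k : nat) = (j : nat).+1 ->
  Wmx m al be j k = al /\ Wmx m al be k j = be.
Proof.
move=> h; rewrite !mxE h.
have -> : ((j : nat).+1 == j) = false by lia.
have -> : ((j : nat).+2 == j) = false by lia.
have -> : ((j : nat) == (j : nat).+1) = false by lia.
by rewrite !eqxx.
Qed.

Lemma Wdiag m (al be : C) (j : 'I_m) : Wmx m al be j j = 1.
Proof. by rewrite mxE eqxx. Qed.

Lemma br_shift m (A B : 'M[C]_m) cc t1 t2 :
  (cc *: A + t1%:M) *m (cc *: B + t2%:M) - (cc *: B + t2%:M) *m (cc *: A + t1%:M)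
  = (cc * cc) *: (A *m B - B *m A).
Proof.
rewrite !mulmxDl !mulmxDr !mul_mx_scalar !mul_scalar_mx -!scalemxAl -!scalemxAr.
move: (A *m B) (B *m A) => P Q.
apply/matrixP => r s; rewrite !mxE; ring.
Qed.

Lemma trace_decomp M (x : 'M[C]_M.+1) : \tr x = 0 ->
  x = \sum_i \sum_j x i j *: (delta_mx i (@ord0 M) *m delta_mx (@ord0 M) j - delta_mx (@ord0 M) j *m delta_mx i (@ord0 M)).
Proof.
move=> Htr.
under eq_bigr => i _ do under eq_bigr => j _ do rewrite mul_delta_mx mul_delta_mx_cond scalerBr.
under eq_bigr => i _ do rewrite sumrB.
rewrite sumrB -matrix_sum_delta.
have -> : \sum_i \sum_j x i j *: (delta_mx (@ord0 M) (@ord0 M) *+ (j == i)) = (\tr x) *: delta_mx (@ord0 M) (@ord0 M).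
  rewrite /mxtrace scaler_suml; apply: eq_bigr => i _.
  rewrite (bigD1 i) //= eqxx mulr1n big1 ?addr0 // => j /negPf ->.
  by rewrite mulr0n scaler0.
by rewrite Htr scale0r subr0.
Qed.

End More.

Lemma u_eq (R : realType) n' (q : R[i]) (j : 'I_n'.+2) :
  u_mx (n := n'.+3) q j = delta_mx j j *m Wmx n'.+2 (a_coef q) (b_coef q).
Proof.
apply/matrixP => r c; rewrite !mxE sum_deltaL mxE.
by case: (r == j); rewrite ?mul1r ?mul0r.
Qed.

Lemma v_eq (R : realType) n' (q : R[i]) (j : 'I_n'.+2) :
  v_mx (n := n'.+3) q j = (1 - (n'.+3)%:R) *: (delta_mx j j *m
     Wmx n'.+2 (-1 * a_coef q) (-1 * b_coef q)) + 1%:M.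
Proof.
apply/matrixP => r c; rewrite !mxE sum_deltaL mxE.
rewrite -!(inj_eq (@ord_inj _)).
repeat case: eqP => ?; rewrite /=; try (exfalso; lia); ring.
Qed.

Theorem propositionA5 (R : realType) (n : nat) (q : R[i]) :
  (3 <= n)%N ->
  q != 0 ->
  (forall k : nat, (0 < k)%N -> q ^+ k != 1) ->
  (forall x : 'M[R[i]]_(n.-1),
      lie_gen (fun y => exists j : 'I_(n.-1), y = u_mx q j) x)
  /\
  (forall x : 'M[R[i]]_(n.-1),
      lie_gen (fun y => exists j : 'I_(n.-1), y = v_mx q j) x <-> \tr x = 0).
Proof.
move=> Hn Hq0 Hroot.
case: n Hn => [|[|[|n']]] // _.
have q1 : 1 + q != 0.
  apply/negP => /eqP h.
  have e : q = -1 by apply/eqP; rewrite -subr_eq0 opprK addrC h.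
  by move: (Hroot 2%N isT); rewrite e sqrrN expr1n eqxx.
have qm : q ^+ (n'.+1).+2 != 1 := Hroot (n'.+1).+2 isT.
have anz : a_coef q != 0 by rewrite /a_coef mulf_neq0 ?invr_eq0.
have bnz : b_coef q != 0 by rewrite /b_coef mulf_neq0 ?invr_eq0 ?oner_eq0.
have Had : forall al be : R[i], al != 0 -> be != 0 -> forall j k : 'I_n'.+2,
    (k : nat) = (j : nat).+1 -> Wmx n'.+2 al be j k != 0 /\ Wmx n'.+2 al be k j != 0.
  by move=> al be ha hb j k h; case: (Wadj al be h) => -> ->.
split.
  move=> x S HS Hgen.
  apply: (key (W := Wmx n'.+2 (a_coef q) (b_coef q))) => //.
  - by move=> k; rewrite Wdiag.
  - by move=> k; apply: Hgen; exists k; rewrite u_eq.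
  - exact: Had.
  - by have := Wunit (or_introl erefl) q1 qm; rewrite /a_coef /b_coef !mul1r.
move=> x; split.
  move=> H; apply: (H (fun y => \tr y = 0)).
    split; first by rewrite mxtrace0.
      by move=> c y z hy hz; rewrite mxtraceD mxtraceZ hy hz mulr0 addr0.
    by move=> y z _ _; rewrite mxtraceD raddfN /= mxtrace_mulC subrr.
  move=> g [j ->]; rewrite v_eq mxtraceD mxtraceZ mxtrace1.
  rewrite /mxtrace; under eq_bigr do rewrite mxE sum_deltaL.
  rewrite (bigD1 j) //= big1 ?addr0; last first.
    by move=> i /negPf ->; rewrite mul0r.
  rewrite eqxx mul1r Wdiag -!natr1; ring.
move=> Htr S HS Hgen.
set cc : R[i] := 1 - (n'.+3)%:R.
have ccnz : cc != 0.
  have -> : cc = - (n'.+2)%:R by rewrite /cc -natr1; ring.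
  by rewrite oppr_eq0 pnatr_eq0.
pose S' Y := exists t, S (cc *: Y + t%:M).
have HS' : lie_subalg S'.
  split.
  - exists 0; rewrite scaler0 add0r (_ : 0%:M = 0); first by case: HS.
    by apply/matrixP => r s; rewrite !mxE mul0rn.
  - move=> c y z [t1 h1] [t2 h2]; exists (c * t1 + t2).
    have := lie_add HS (lie_scale c HS h1) h2.
    congr S; apply/matrixP => r s; rewrite !mxE; case: (r == s); rewrite /=; ring.
  - move=> y z [t1 h1] [t2 h2]; exists 0.
    have := lie_scale (cc^-1) HS (lie_br HS h1 h2).
    rewrite br_shift scalerA (_ : 0%:M = 0); last first.
      by apply/matrixP => r s; rewrite !mxE mul0rn.
    by rewrite addr0 mulrA mulVf // mul1r.
have allS' : forall Y, S' Y.
  apply: (key (W := Wmx n'.+2 (-1 * a_coef q) (-1 * b_coef q))) => //.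
  - by move=> k; rewrite Wdiag.
  - move=> k; exists 1; rewrite -v_eq; apply: Hgen; by exists k.
  - by apply: Had; rewrite mulN1r oppr_eq0.
  - by have := Wunit (or_intror erefl) q1 qm; rewrite /a_coef /b_coef.
have Sbr : forall A B, S (A *m B - B *m A).
  move=> A B; case: (allS' A) => t1 h1; case: (allS' B) => t2 h2.
  have := lie_scale ((cc * cc)^-1) HS (lie_br HS h1 h2).
  by rewrite br_shift scalerA mulVf ?scale1r // mulf_neq0.
rewrite (trace_decomp Htr); apply: lie_sum => // i; apply: lie_sum => // j.
by apply: lie_scale => //; apply: Sbr.
Qed.
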